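(* Let $\mathbf L=(L,\vee,\wedge,0,1)$ be a complemented modular lattice with $0\ne1$. Then the following are equivalent: (i) $x^{++}=\{x\}$ for all $x\in L$; (ii) for every $x\in L$ and every $y\in x^{++}$ there exists some $z\in y^+$ such that either $(x\vee y)\wedge z=0$ or $(x\wedge y)\vee z=1$.
   Context: For $a\in L$, $a^+:=\{x\in L\mid a\vee x=1,\ a\wedge x=0\}$ (the set of all complements of $a$). For $A\subseteq L$, $A^+:=\{x\in L\mid a\vee x=1\text{ and }a\wedge x=0\text{ for all }a\in A\}$, and $a^{++}:=(a^+)^+$. *)

(* Defs.v *)
From mathcomp Require Import all_boot all_order.
Set Implicit Arguments. Unset Strict Implicit. Unset Printing Implicit Defensive.
Import Order.Theory.
Local Open Scope order_scope.

Section Comps.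
Context {disp : Order.disp_t} {L : tbLatticeType disp}.

Definition compl_set (a : L) : L -> Prop :=
  fun x => a `|` x = \top /\ a `&` x = \bot.

Definition compl_of_set (A : L -> Prop) : L -> Prop :=
  fun x => forall a, A a -> a `|` x = \top /\ a `&` x = \bot.

Definition compl2 (a : L) : L -> Prop := compl_of_set (compl_set a).

Definition modular_lattice : Prop :=
  forall x y z : L, x <= z -> x `|` (y `&` z) = (x `|` y) `&` z.

Definition complemented_lattice : Prop :=
  forall x : L, exists y : L, compl_set x y.
End Comps.

(* Main.v *)
Require Import Defs.
From mathcomp Require Import all_boot all_order.
Local Open Scope order_scope.
Import Order.Theory.

Theorem theorem1 (disp : Order.disp_t) (L : tbLatticeType disp)
  (Hmod : modular_lattice (L := L))
  (Hcompl : complemented_lattice (L := L))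
  (H01 : (\bot : L) <> \top) :
  (forall x : L, forall y : L, compl2 x y <-> y = x)
  <->
  (forall x y : L, compl2 x y ->
     exists z : L, compl_set y z /\
       ((x `|` y) `&` z = \bot \/ (x `&` y) `|` z = \top)).
Proof.
have common : forall a b c : L, a <= b -> a `|` c = \top -> b `&` c = \bot -> a = b.
  move=> a b c ab ac bc.
  have := Hmod a c b ab.
  by rewrite ac meet1x (meetC c b) bc joinx0.
split.
  move=> H x y /H ->.
  have [z [h1 h2]] := Hcompl x.
  by exists z; split => //; left; rewrite joinxx.
move=> H x y; split; last first.
  by move=> -> a [h1 h2]; rewrite joinC meetC.
move=> Hy.
have [c [xc1 xc2]] := Hcompl x.
have [cy1 cy2] := Hy c (conj xc1 xc2).
have [z [[yz1 yz2] [Hc|Hc]]] := H x y Hy.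
- have e : y = x `|` y.
    apply: (common y (x `|` y) z (leUr _ _) yz1 Hc).
  have xy : x <= y by rewrite e leUl.
  apply/esym/(common x y c xy xc1); by rewrite meetC.
- have e : x `&` y = y.
    apply: (common (x `&` y) y z (leIr _ _) Hc yz2).
  have yx : y <= x by rewrite -e leIl.
  apply: (common y x c yx _ xc2); by rewrite joinC.
Qed.
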